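(* For all $\boldsymbol\mu,\boldsymbol\mu'\in\mathcal P(\mathcal X\times[K])$ and every collection $\boldsymbol\pi=(\pi_k)_{k\in[K]}$ of decision rules $\pi_k:\mathcal X\times\mathcal P(\mathcal X)\to\mathcal P(\mathcal U)$ with $|\pi_k(x,\mu_1)-\pi_k(x,\mu_2)|_1\le L_Q|\mu_1-\mu_2|_1$ for all $x,k,\mu_1,\mu_2$: (a) $|\nu^{\mathrm{MF}}(\boldsymbol\mu,\boldsymbol\pi)[\mathcal U]-\nu^{\mathrm{MF}}(\boldsymbol\mu',\boldsymbol\pi)[\mathcal U]|_1\le|\nu^{\mathrm{MF}}(\boldsymbol\mu,\boldsymbol\pi)-\nu^{\mathrm{MF}}(\boldsymbol\mu',\boldsymbol\pi)|_1\le|\boldsymbol\mu-\boldsymbol\mu'|_1+L_Q|\boldsymbol\mu[\mathcal X]-\boldsymbol\mu'[\mathcal X]|_1$; (b) $\sum_{k\in[K]}|r_k^{\mathrm{MF}}(\boldsymbol\mu,\boldsymbol\pi)-r_k^{\mathrm{MF}}(\boldsymbol\mu',\boldsymbol\pi)|\le S_R'|\boldsymbol\mu-\boldsymbol\mu'|_1+S_R''|\boldsymbol\mu[\mathcal X]-\boldsymbol\mu'[\mathcal X]|_1$; (c) $|P^{\mathrm{MF}}(\boldsymbol\mu,\boldsymbol\pi)[\mathcal X]-P^{\mathrm{MF}}(\boldsymbol\mu',\boldsymbol\pi)[\mathcal X]|_1\le|P^{\mathrm{MF}}(\boldsymbol\mu,\boldsymbol\pi)-P^{\mathrm{MF}}(\boldsymbol\mu',\boldsymbol\pi)|_1\le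 S_P'|\boldsymbol\mu-\boldsymbol\mu'|_1+S_P''|\boldsymbol\mu[\mathcal X]-\boldsymbol\mu'[\mathcal X]|_1$, where $S_R'=M_R+L_R$, $S_R''=M_RL_Q+L_R(1+L_Q)$, $S_P'=1+L_P$, $S_P''=L_Q+L_P(1+L_Q)$.
   Context: $K\ge1$, $[K]=\{1,\dots,K\}$, $\mathcal X,\mathcal U$ finite, $\mathcal P(A)$ the probability distributions on $A$, $|\cdot|_1$ the $L_1$ norm, constants $M_R,L_R,L_P,L_Q>0$. Marginals: for $\boldsymbol\mu$ on $\mathcal X\times[K]$, $\boldsymbol\mu[\mathcal X](x)=\sum_k\boldsymbol\mu(x,k)$; for $\boldsymbol\nu$ on $\mathcal U\times[K]$, $\boldsymbol\nu[\mathcal U](u)=\sum_k\boldsymbol\nu(u,k)$. For each $k$: $r_k:\mathcal X\times\mathcal U\times\mathcal P(\mathcal X)\times\mathcal P(\mathcal U)\to\mathbb R$ and $P_k:\mathcal X\times\mathcal U\times\mathcal P(\mathcal X)\times\mathcal P(\mathcal U)\to\mathcal P(\mathcal X)$ with $|r_k|\le M_R$, $|r_k(x,u,\mu_1,\nu_1)-r_k(x,u,\mu_2,\nu_2)|\le L_R(|\mu_1-\mu_2|_1+|\nu_1-\nu_2|_1)$, $|P_k(x,u,\mu_1,\nu_1)-P_k(x,u,\mu_2,\nu_2)|_1\le L_P(|\mu_1-\mu_2|_1+|\nu_1-\nu_2|_1)$. Mean-field operators: $\nu^{\mathrm{MF}}(\boldsymbol\mu,\boldsymbol\pi)(u,k)=\sum_x\pi_k(x,\boldsymbol\mu[\mathcal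 X])(u)\boldsymbol\mu(x,k)$; $P^{\mathrm{MF}}(\boldsymbol\mu,\boldsymbol\pi)(x',k)=\sum_{x,u}\boldsymbol\mu(x,k)\pi_k(x,\boldsymbol\mu[\mathcal X])(u)P_k(x,u,\boldsymbol\mu[\mathcal X],\nu^{\mathrm{MF}}(\boldsymbol\mu,\boldsymbol\pi)[\mathcal U])(x')$; $r_k^{\mathrm{MF}}(\boldsymbol\mu,\boldsymbol\pi)=\sum_{x,u}\boldsymbol\mu(x,k)\pi_k(x,\boldsymbol\mu[\mathcal X])(u)r_k(x,u,\boldsymbol\mu[\mathcal X],\nu^{\mathrm{MF}}(\boldsymbol\mu,\boldsymbol\pi)[\mathcal U])$. *)

(* Defs.v *)
(* R is an abstract real field; X, U finite types;
   [K] is represented by 'I_K (indices 0..K-1). *)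
From mathcomp Require Import all_boot all_order all_algebra.
Set Implicit Arguments. Unset Strict Implicit. Unset Printing Implicit Defensive.
Import Order.TTheory GRing.Theory Num.Theory.
Local Open Scope ring_scope.

Section Defs.
Variable R : realFieldType.

Definition is_dist (T : finType) (p : T -> R) : Prop :=
  (forall t, 0 <= p t) /\ \sum_(t : T) p t = 1.

Definition l1dist (T : finType) (p q : T -> R) : R := \sum_(t : T) `|p t - q t|.

Variables (X U : finType) (K : nat).

Definition margX (mu : X * 'I_K -> R) : X -> R := fun x => \sum_(k < K) mu (x, k).
Definition margU (nu : U * 'I_K -> R) : U -> R := fun u => \sum_(k < K) nu (u, k).

(* pi k x m : decision rule of class k, a distribution on U *)
Definition nuMF (pi : 'I_K -> X -> (X -> R) -> U -> R) (mu : X * 'I_K -> R)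
  : U * 'I_K -> R :=
  fun uk => \sum_(x : X) pi uk.2 x (margX mu) uk.1 * mu (x, uk.2).

Definition PMF (P : 'I_K -> X -> U -> (X -> R) -> (U -> R) -> X -> R)
  (pi : 'I_K -> X -> (X -> R) -> U -> R) (mu : X * 'I_K -> R) : X * 'I_K -> R :=
  fun xk => \sum_(x : X) \sum_(u : U)
     mu (x, xk.2) * pi xk.2 x (margX mu) u *
     P xk.2 x u (margX mu) (margU (nuMF pi mu)) xk.1.

Definition rMF (r : 'I_K -> X -> U -> (X -> R) -> (U -> R) -> R)
  (pi : 'I_K -> X -> (X -> R) -> U -> R) (mu : X * 'I_K -> R) (k : 'I_K) : R :=
  \sum_(x : X) \sum_(u : U)
     mu (x, k) * pi k x (margX mu) u * r k x u (margX mu) (margU (nuMF pi mu)).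

End Defs.

(* Main.v *)
Require Import Defs.
From mathcomp Require Import all_boot all_order all_algebra.
From mathcomp Require Import ring lra.
Import Order.TTheory GRing.Theory Num.Theory.
Local Open Scope ring_scope.

Section H.
Variable R : realFieldType.

Lemma sum_pair (T : finType) (K : nat) (f : T * 'I_K -> R) :
  \sum_p f p = \sum_t \sum_(k < K) f (t, k).
Proof. by rewrite pair_big; apply: eq_bigr => -[t k]. Qed.

Lemma marg_le (T : finType) (K : nat) (f g : T * 'I_K -> R) :
  l1dist (fun t => \sum_(k < K) f (t, k)) (fun t => \sum_(k < K) g (t, k))
  <= l1dist f g.
Proof.
rewrite /l1dist sum_pair; apply: ler_sum => t _; rewrite -sumrB.
exact: ler_norm_sum.
Qed.

Lemma kl (T : finType) (a a' : R) (b b' : T -> R) :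
  is_dist b -> 0 <= a' ->
  \sum_t `|a * b t - a' * b' t| <= `|a - a'| + a' * l1dist b b'.
Proof.
move=> [b0 b1] a0.
have H : forall t, `|a * b t - a' * b' t| <= `|a - a'| * b t + a' * `|b t - b' t|.
  move=> t.
  have -> : a * b t - a' * b' t = (a - a') * b t + a' * (b t - b' t) by ring.
  apply: le_trans (ler_normD _ _) _.
  by rewrite !normrM (ger0_norm (b0 t)) (ger0_norm a0).
apply: le_trans (ler_sum _ (fun t _ => H t)) _.
by rewrite big_split /= -mulr_sumr b1 mulr1 /l1dist -mulr_sumr.
Qed.

Lemma sumq (X : finType) (K : nat) (mu mu' : X * 'I_K -> R) (C : R) :
  is_dist mu' ->
  \sum_x \sum_(k < K) (`|mu (x, k) - mu' (x, k)| + mu' (x, k) * C)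
  = l1dist mu mu' + C.
Proof.
move=> [_ h1].
rewrite -(@sum_pair _ _ (fun p => `|mu p - mu' p| + mu' p * C)) big_split /= -mulr_suml h1 mul1r.
by rewrite /l1dist.
Qed.

Lemma margX_dist (X : finType) (K : nat) (mu : X * 'I_K -> R) :
  is_dist mu -> is_dist (margX mu).
Proof.
move=> [h0 h1]; split.
  by move=> x; rewrite /margX; apply: sumr_ge0.
by rewrite /margX -(@sum_pair _ _ (mu)).
Qed.

Lemma nu_dist (X U : finType) (K : nat) (pi : 'I_K -> X -> (X -> R) -> U -> R)
  (mu : X * 'I_K -> R) :
  (forall k x (m : X -> R), is_dist m -> is_dist (pi k x m)) ->
  is_dist mu -> is_dist (margU (nuMF pi mu)).
Proof.
move=> hpi hmu; have hm := @margX_dist _ _ mu hmu.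
case: hmu => h0 h1.
split.
  move=> u; rewrite /margU; apply: sumr_ge0 => k _; rewrite /nuMF.
  apply: sumr_ge0 => x _; apply: mulr_ge0 => //.
  by case: (hpi k x _ hm).
rewrite /margU /nuMF /=.
transitivity (\sum_(k < K) \sum_x mu (x, k)).
  rewrite exchange_big /=; apply: eq_bigr => k _.
  rewrite exchange_big /=; apply: eq_bigr => x _.
  by rewrite -mulr_suml; case: (hpi k x _ hm) => _ ->; rewrite mul1r.
by rewrite exchange_big -(@sum_pair _ _ mu).
Qed.


Lemma reidx_nu (X U : finType) (K : nat) (F : U -> 'I_K -> X -> R) :
  \sum_(p : U * 'I_K) \sum_x F p.1 p.2 x = \sum_x \sum_(k < K) \sum_u F u k x.
Proof.
rewrite (@sum_pair _ _ (fun p => \sum_x F p.1 p.2 x)) /= exchange_big /=.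
under eq_bigr => k _ do rewrite exchange_big /=.
by rewrite exchange_big.
Qed.

Lemma reidx_P (X U : finType) (K : nat) (F : X -> 'I_K -> X -> U -> R) :
  \sum_(p : X * 'I_K) \sum_x \sum_u F p.1 p.2 x u
  = \sum_x \sum_(k < K) \sum_u \sum_y F y k x u.
Proof.
rewrite (@sum_pair _ _ (fun p => \sum_x \sum_u F p.1 p.2 x u)) /= exchange_big /=.
under eq_bigr => k _ do rewrite exchange_big /=.
under eq_bigr => k _ do under eq_bigr => x _ do rewrite exchange_big /=.
by rewrite exchange_big.
Qed.

Lemma klr (T : finType) (a a' : R) (b b' : T -> R) :
  is_dist b -> 0 <= a' ->
  \sum_t `|b t * a - b' t * a'| <= `|a - a'| + a' * l1dist b b'.
Proof.
move=> hb ha; under eq_bigr => t _ do rewrite (mulrC (b t)) (mulrC (b' t)).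
exact: kl.
Qed.


Lemma nu_bound (X U : finType) (K : nat) (L_Q : R)
  (mu mu' : X * 'I_K -> R) (hmu : is_dist mu) (hmu' : is_dist mu')
  (pi : 'I_K -> X -> (X -> R) -> U -> R)
  (hpi_dist : forall k x (m : X -> R), is_dist m -> is_dist (pi k x m))
  (hpi_lip : forall k x (m1 m2 : X -> R), is_dist m1 -> is_dist m2 ->
      l1dist (pi k x m1) (pi k x m2) <= L_Q * l1dist m1 m2) :
  l1dist (nuMF pi mu) (nuMF pi mu')
    <= l1dist mu mu' + L_Q * l1dist (margX mu) (margX mu').
Proof.
have hm := @margX_dist _ _ mu hmu.
have hm' := @margX_dist _ _ mu' hmu'.
case: (hmu') => h0' _.
rewrite {1}/l1dist /nuMF.
under eq_bigr => p _ do rewrite -sumrB.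
apply: le_trans; first by apply: ler_sum => p _; exact: ler_norm_sum.
rewrite (@reidx_nu _ _ _ (fun u k x => `|pi k x (margX mu) u * mu (x, k) - pi k x (margX mu') u * mu' (x, k)|)).
rewrite -(@sumq _ _ mu mu' (L_Q * l1dist (margX mu) (margX mu'))) //.
apply: ler_sum => x _; apply: ler_sum => k _.
apply: le_trans (@klr _ _ _ _ (pi k x (margX mu')) (hpi_dist k x _ hm) (h0' (x, k))) _.
by rewrite lerD2l ler_wpM2l // hpi_lip.
Qed.


Lemma norm2 (A B : finType) (F G : A -> B -> R) :
  `|\sum_a \sum_b F a b - \sum_a \sum_b G a b| <= \sum_a \sum_b `|F a b - G a b|.
Proof.
rewrite -sumrB; apply: le_trans (ler_norm_sum _ _ _) _.
by apply: ler_sum => a _; rewrite -sumrB; exact: ler_norm_sum.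
Qed.

Lemma P_bound (X U : finType) (K : nat) (L_P L_Q : R)
  (P : 'I_K -> X -> U -> (X -> R) -> (U -> R) -> X -> R)
  (hP_dist : forall k x u (m : X -> R) (n : U -> R),
      is_dist m -> is_dist n -> is_dist (P k x u m n))
  (hP_lip : forall k x u (m1 m2 : X -> R) (n1 n2 : U -> R),
      is_dist m1 -> is_dist m2 -> is_dist n1 -> is_dist n2 ->
      l1dist (P k x u m1 n1) (P k x u m2 n2) <= L_P * (l1dist m1 m2 + l1dist n1 n2))
  (mu mu' : X * 'I_K -> R) (hmu : is_dist mu) (hmu' : is_dist mu')
  (pi : 'I_K -> X -> (X -> R) -> U -> R)
  (hpi_dist : forall k x (m : X -> R), is_dist m -> is_dist (pi k x m))
  (hpi_lip : forall k x (m1 m2 : X -> R), is_dist m1 -> is_dist m2 ->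
      l1dist (pi k x m1) (pi k x m2) <= L_Q * l1dist m1 m2) :
  l1dist (PMF P pi mu) (PMF P pi mu')
    <= l1dist mu mu' + (L_Q * l1dist (margX mu) (margX mu') +
        L_P * (l1dist (margX mu) (margX mu') +
               l1dist (margU (nuMF pi mu)) (margU (nuMF pi mu')))).
Proof.
have hm := @margX_dist _ _ mu hmu.
have hm' := @margX_dist _ _ mu' hmu'.
have hn := @nu_dist _ _ _ pi mu hpi_dist hmu.
have hn' := @nu_dist _ _ _ pi mu' hpi_dist hmu'.
case: (hmu') => h0' _.
set dm := l1dist (margX mu) (margX mu').
set dn := l1dist (margU (nuMF pi mu)) (margU (nuMF pi mu')).
rewrite {1}/l1dist /PMF.
apply: le_trans; first by apply: ler_sum => p _; exact: norm2.
rewrite (@reidx_P _ _ _ (fun y k x u => `|mu (x, k) * pi k x (margX mu) u *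
     P k x u (margX mu) (margU (nuMF pi mu)) y -
     mu' (x, k) * pi k x (margX mu') u *
     P k x u (margX mu') (margU (nuMF pi mu')) y|)) /=.
rewrite -(@sumq _ _ mu mu' (L_Q * dm + L_P * (dm + dn))) //.
apply: ler_sum => x _; apply: ler_sum => k _.
have hpi' := hpi_dist k x _ hm'.
case: (hpi') => hp0 hp1.
apply: le_trans.
  apply: ler_sum => u _.
  apply: (@kl _ _ _ _ (P k x u (margX mu') (margU (nuMF pi mu')))).
    exact: hP_dist.
  exact: mulr_ge0.
rewrite big_split /=.
rewrite mulrDr addrA; apply: lerD.
  apply: le_trans (@kl _ _ _ _ (pi k x (margX mu')) (hpi_dist k x _ hm) (h0' (x, k))) _.
  by rewrite lerD2l ler_wpM2l // hpi_lip.
apply: le_trans.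
  apply: ler_sum => u _.
  apply: (ler_wpM2l (mulr_ge0 (h0' (x, k)) (hp0 u))).
  exact: hP_lip.
by rewrite -mulr_suml -mulr_sumr hp1 mulr1.
Qed.


Lemma r_bound (X U : finType) (K : nat) (M_R L_R L_Q : R) (hM : 0 <= M_R)
  (r : 'I_K -> X -> U -> (X -> R) -> (U -> R) -> R)
  (hr_bound : forall k x u (m : X -> R) (n : U -> R),
      is_dist m -> is_dist n -> `|r k x u m n| <= M_R)
  (hr_lip : forall k x u (m1 m2 : X -> R) (n1 n2 : U -> R),
      is_dist m1 -> is_dist m2 -> is_dist n1 -> is_dist n2 ->
      `|r k x u m1 n1 - r k x u m2 n2| <= L_R * (l1dist m1 m2 + l1dist n1 n2))
  (mu mu' : X * 'I_K -> R) (hmu : is_dist mu) (hmu' : is_dist mu')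
  (pi : 'I_K -> X -> (X -> R) -> U -> R)
  (hpi_dist : forall k x (m : X -> R), is_dist m -> is_dist (pi k x m))
  (hpi_lip : forall k x (m1 m2 : X -> R), is_dist m1 -> is_dist m2 ->
      l1dist (pi k x m1) (pi k x m2) <= L_Q * l1dist m1 m2) :
  \sum_(k < K) `|rMF r pi mu k - rMF r pi mu' k|
    <= M_R * (l1dist mu mu' + L_Q * l1dist (margX mu) (margX mu')) +
        L_R * (l1dist (margX mu) (margX mu') +
               l1dist (margU (nuMF pi mu)) (margU (nuMF pi mu'))).
Proof.
have hm := @margX_dist _ _ mu hmu.
have hm' := @margX_dist _ _ mu' hmu'.
have hn := @nu_dist _ _ _ pi mu hpi_dist hmu.
have hn' := @nu_dist _ _ _ pi mu' hpi_dist hmu'.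
case: (hmu') => h0' h1'.
set dm := l1dist (margX mu) (margX mu').
set dn := l1dist (margU (nuMF pi mu)) (margU (nuMF pi mu')).
rewrite /rMF.
apply: le_trans; first by apply: ler_sum => p _; exact: norm2.
rewrite exchange_big /=.
apply: (@le_trans _ _ (\sum_x \sum_(k < K) (M_R * (`|mu (x, k) - mu' (x, k)| + mu' (x, k) * (L_Q * dm))
   + mu' (x, k) * (L_R * (dm + dn))))).
  apply: ler_sum => x _; apply: ler_sum => k _.
  have hpi' := hpi_dist k x _ hm'.
  case: (hpi') => hp0 hp1.
  have H : forall u, `|mu (x, k) * pi k x (margX mu) u * r k x u (margX mu) (margU (nuMF pi mu)) -
      mu' (x, k) * pi k x (margX mu') u * r k x u (margX mu') (margU (nuMF pi mu'))|
    <= M_R * `|mu (x, k) * pi k x (margX mu) u - mu' (x, k) * pi k x (margX mu') u|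
       + mu' (x, k) * pi k x (margX mu') u * (L_R * (dm + dn)).
    move=> u.
    have hc := hr_bound k x u _ _ hm hn.
    have hcc := hr_lip k x u _ _ _ _ hm hm' hn hn'.
    move: hc hcc.
    set a := mu (x, k) * pi k x (margX mu) u.
    set a' := mu' (x, k) * pi k x (margX mu') u.
    set c := r k x u (margX mu) (margU (nuMF pi mu)).
    set c' := r k x u (margX mu') (margU (nuMF pi mu')).
    have ha' : 0 <= a' by apply: mulr_ge0.
    clearbody a a' c c' => hc hcc.
    have -> : a * c - a' * c' = (a - a') * c + a' * (c - c') by ring.
    apply: le_trans (ler_normD _ _) _.
    rewrite !normrM (ger0_norm ha') (mulrC M_R); apply: lerD.
      by apply: ler_wpM2l => //; apply: normr_ge0.
    by apply: ler_wpM2l.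
  apply: le_trans (ler_sum _ (fun u _ => H u)) _.
  rewrite big_split /= -mulr_sumr; apply: lerD.
    apply: ler_wpM2l => //.
    apply: le_trans (@kl _ _ _ _ (pi k x (margX mu')) (hpi_dist k x _ hm) (h0' (x, k))) _.
    by rewrite lerD2l ler_wpM2l // hpi_lip.
  by rewrite -mulr_suml -mulr_sumr hp1 mulr1.
under eq_bigr => x _ do rewrite big_split /=.
rewrite big_split /=.
under eq_bigr => x _ do rewrite -mulr_sumr.
rewrite -mulr_sumr sumq //.
under eq_bigr => x _ do rewrite -mulr_suml.
by rewrite -mulr_suml -(@sum_pair _ _ mu') h1' mul1r.
Qed.

End H.

Theorem lemma11 (R : realFieldType) (X U : finType) (K : nat) (K_pos : (0 < K)%N)
  (M_R L_R L_P L_Q : R)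
  (M_R_pos : 0 < M_R) (L_R_pos : 0 < L_R) (L_P_pos : 0 < L_P) (L_Q_pos : 0 < L_Q)
  (r : 'I_K -> X -> U -> (X -> R) -> (U -> R) -> R)
  (P : 'I_K -> X -> U -> (X -> R) -> (U -> R) -> X -> R)
  (hr_bound : forall k x u (m : X -> R) (n : U -> R),
      is_dist m -> is_dist n -> `|r k x u m n| <= M_R)
  (hr_lip : forall k x u (m1 m2 : X -> R) (n1 n2 : U -> R),
      is_dist m1 -> is_dist m2 -> is_dist n1 -> is_dist n2 ->
      `|r k x u m1 n1 - r k x u m2 n2| <= L_R * (l1dist m1 m2 + l1dist n1 n2))
  (hP_dist : forall k x u (m : X -> R) (n : U -> R),
      is_dist m -> is_dist n -> is_dist (P k x u m n))
  (hP_lip : forall k x u (m1 m2 : X -> R) (n1 n2 : U -> R),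
      is_dist m1 -> is_dist m2 -> is_dist n1 -> is_dist n2 ->
      l1dist (P k x u m1 n1) (P k x u m2 n2) <= L_P * (l1dist m1 m2 + l1dist n1 n2))
  (mu mu' : X * 'I_K -> R) (hmu : is_dist mu) (hmu' : is_dist mu')
  (pi : 'I_K -> X -> (X -> R) -> U -> R)
  (hpi_dist : forall k x (m : X -> R), is_dist m -> is_dist (pi k x m))
  (hpi_lip : forall k x (m1 m2 : X -> R), is_dist m1 -> is_dist m2 ->
      l1dist (pi k x m1) (pi k x m2) <= L_Q * l1dist m1 m2) :
  let S_R' := M_R + L_R in
  let S_R'' := M_R * L_Q + L_R * (1 + L_Q) in
  let S_P' := 1 + L_P in
  let S_P'' := L_Q + L_P * (1 + L_Q) in
  [/\ (l1dist (margU (nuMF pi mu)) (margU (nuMF pi mu'))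
         <= l1dist (nuMF pi mu) (nuMF pi mu')
       /\ l1dist (nuMF pi mu) (nuMF pi mu')
         <= l1dist mu mu' + L_Q * l1dist (margX mu) (margX mu')),
      \sum_(k < K) `|rMF r pi mu k - rMF r pi mu' k|
         <= S_R' * l1dist mu mu' + S_R'' * l1dist (margX mu) (margX mu') &
      (l1dist (margX (PMF P pi mu)) (margX (PMF P pi mu'))
         <= l1dist (PMF P pi mu) (PMF P pi mu')
       /\ l1dist (PMF P pi mu) (PMF P pi mu')
         <= S_P' * l1dist mu mu' + S_P'' * l1dist (margX mu) (margX mu'))].
Proof.
move=> S_R' S_R'' S_P' S_P''.
have hm := @margX_dist _ _ _ mu hmu.
have hm' := @margX_dist _ _ _ mu' hmu'.
have hnu := @nu_bound _ _ _ _ L_Q mu mu' hmu hmu' pi hpi_dist hpi_lip.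
have hmU : l1dist (margU (nuMF pi mu)) (margU (nuMF pi mu')) <= l1dist (nuMF pi mu) (nuMF pi mu').
  by rewrite /margU; exact: marg_le.
have hdn := le_trans hmU hnu.
have hl1 : 0 <= l1dist mu mu' by apply: sumr_ge0 => t _.
have hdm : 0 <= l1dist (margX mu) (margX mu') by apply: sumr_ge0 => t _.
split.
- by split.
- apply: le_trans (@r_bound _ _ _ _ M_R L_R L_Q (ltW M_R_pos) r hr_bound hr_lip mu mu' hmu hmu' pi hpi_dist hpi_lip) _.
  rewrite /S_R' /S_R''.
  move: hdn L_R_pos M_R_pos L_Q_pos hl1 hdm.
  set a := l1dist mu mu'. set b := l1dist (margX mu) (margX mu').
  set c := l1dist (margU _) _. move=> *. nra.
- split.
    by rewrite /margX; exact: marg_le.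
  apply: le_trans (@P_bound _ _ _ _ L_P L_Q P hP_dist hP_lip mu mu' hmu hmu' pi hpi_dist hpi_lip) _.
  rewrite /S_P' /S_P''.
  move: hdn L_P_pos L_Q_pos hl1 hdm.
  set a := l1dist mu mu'. set b := l1dist (margX mu) (margX mu').
  set c := l1dist (margU _) _. move=> *. nra.
Qed.
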